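(* Let $f\in\mathbb{C}_v(z)$ have degree $d\ge2$. If there exist constants $C>0$ and $\lambda>1$ such that $(f^n)^{\natural}(\zeta)\ge C\lambda^n$ for all $n\in\mathbb{N}$ and all $\zeta\in\mathcal{J}_f$, then $\mathcal{J}_f\subseteq\mathbb{P}^1(\mathbb{C}_v)$, i.e. $\mathcal{J}_f$ contains no points of $\mathbb{H}^1_{\mathrm{Berk}}$.
   Context: $\mathbb{C}_v$ is an algebraically closed field of characteristic zero, complete with respect to a nontrivial non-archimedean absolute value. $\mathbb{P}^1_{\mathrm{Berk}}$ is its Berkovich projective line, $\mathbb{P}^1(\mathbb{C}_v)$ the type I points and $\mathbb{H}^1_{\mathrm{Berk}}$ the others. $\mathcal{J}_f$ is the Berkovich Julia set (complement of the set of points having a neighborhood $V$ with $\bigcup_{n\ge1}f^n(V)$ omitting infinitely many points). $f^{\natural}$ is the spherical derivative $\lim_{\zeta'\to\zeta}\|f(\zeta),f(\zeta')\|/\|\zeta,\zeta'\|$ w.r.t. the spherical kernel $\|\cdot,\cdot\|$ (the unique extension of the chordal metric $\rho(z,w)=|z-w|/(\max\{1,|z|\}\max\{1,|w|\})$ to $\mathbb{P}^1_{\mathrm{Berk}}$ continuous off the non-type-I diagonal and equal to $\limsup\rho(x,y)$ over type I $(x,y)\to(\zeta,\xi)$). *)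

(* Defs.v *)
From HB Require Import structures.
From mathcomp Require Import all_boot all_order all_algebra.
From mathcomp Require Import boolp classical_sets functions cardinality reals.
Set Implicit Arguments. Unset Strict Implicit. Unset Printing Implicit Defensive.
Import Order.TTheory GRing.Theory Num.Theory.
Local Open Scope classical_set_scope.
Local Open Scope ring_scope.

Section Berkovich.
Variables (R : realType) (K : closedFieldType) (absv : K -> R).

Record is_Cv_abs : Prop := {
  absv_ge0 : forall x, 0 <= absv x;
  absv_eq0 : forall x, absv x = 0 <-> x = 0;
  absvM : forall x y, absv (x * y) = absv x * absv y;
  absv_ultra : forall x y, absv (x + y) <= Num.max (absv x) (absv y);
  absv_nontriv : exists x, absv x <> 0 /\ absv x <> 1;
  absv_complete : forall u : nat -> K,
    (forall e, 0 < e -> exists N, forall m n, (N <= m)%N -> (N <= n)%N ->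
        absv (u m - u n) < e) ->
    exists l, forall e, 0 < e -> exists N, forall n, (N <= n)%N -> absv (u n - l) < e
}.

(* Points of the Berkovich affine line: multiplicative seminorms on K[T]
   extending absv. Points of P^1_Berk are represented in the carrier
   [option ({poly K} -> R)], [None] being the point infinity. *)
Definition is_mseminorm (s : {poly K} -> R) : Prop :=
  [/\ forall p, 0 <= s p,
      forall p q, s (p * q) = s p * s q,
      forall p q, s (p + q) <= s p + s q &
      forall c, s c%:P = absv c].

Definition berkT := option ({poly K} -> R).

Definition A1 : set ({poly K} -> R) := [set s | is_mseminorm s].

Definition BP : set berkT := fun z => match z with None => True | Some s => A1 s end.

(* Topology on A^1_Berk: weakest topology making s |-> s g continuous for all g;
   subbasic opens { s | a < s g < b }. *)
Definition A1open (U : set ({poly K} -> R)) : Prop :=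
  U `<=` A1 /\
  forall s, U s -> exists l : seq ({poly K} * R * R),
     (forall t, t \in l -> t.1.2 < s t.1.1 < t.2) /\
     (forall s', A1 s' -> (forall t, t \in l -> t.1.2 < s' t.1.1 < t.2) -> U s').

Definition A1compact (Cs : set ({poly K} -> R)) : Prop :=
  Cs `<=` A1 /\
  forall (I : Type) (O : I -> set ({poly K} -> R)),
    (forall i, A1open (O i)) -> Cs `<=` \bigcup_i O i ->
    exists (m : nat) (f : 'I_m -> I), Cs `<=` \bigcup_(k : 'I_m) O (f k).

(* P^1_Berk is the one-point compactification of A^1_Berk. *)
Definition berk_open (W : set berkT) : Prop :=
  W `<=` BP /\ A1open [set s | W (Some s)] /\
  (W None -> A1compact (A1 `\` [set s | W (Some s)])).

Definition berk_nbhd (z : berkT) (V : set berkT) : Prop :=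
  V `<=` BP /\ exists U, [/\ berk_open U, U z & U `<=` V].

(* type I points: P^1(K) embedded in P^1_Berk *)
Definition typeI_pt (x : option K) : berkT :=
  match x with None => None | Some a => Some (fun g : {poly K} => absv g.[a]) end.

Definition is_typeI (z : berkT) : Prop := exists x, z = typeI_pt x.

Definition chordal (x y : option K) : R :=
  match x, y with
  | Some z, Some w => absv (z - w) / (Num.max 1 (absv z) * Num.max 1 (absv w))
  | Some z, None => 1 / Num.max 1 (absv z)
  | None, Some w => 1 / Num.max 1 (absv w)
  | None, None => 0
  end.

(* spherical kernel: limsup of the chordal metric over type I (x,y) -> (z,w) *)
Definition sph_kernel (z w : berkT) : R :=
  inf [set r | exists U V, [/\ berk_open U, U z, berk_open V, V w &
         r = sup [set c | exists x y, [/\ U (typeI_pt x), V (typeI_pt y) &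
                                         c = chordal x y]]]].

(* the rational map f = P/Q and its action on P^1_Berk *)
Definition rat_deg (P Q : {poly K}) : nat := maxn (size P).-1 (size Q).-1.

(* homogenisation: Q^(deg g) * g(P/Q) *)
Definition hom_comp (g P Q : {poly K}) : {poly K} :=
  \sum_(i < size g) g`_i *: (P ^+ i * Q ^+ ((size g).-1 - i)).

Definition value_at_inf (P Q : {poly K}) : option K :=
  if (size Q < size P)%N then None
  else if size P == size Q then Some (lead_coef P / lead_coef Q) else Some 0.

(* [g]_{f(z)} = [g o f]_z ; f(z) = infinity at (type I) poles *)
Definition berk_act (P Q : {poly K}) (z : berkT) : berkT :=
  match z with
  | None => typeI_pt (value_at_inf P Q)
  | Some s => if s Q == 0 then None
              else Some (fun g => s (hom_comp g P Q) / (s Q) ^+ (size g).-1)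
  end.

Definition sph_deriv_is (F : berkT -> berkT) (z : berkT) (L : R) : Prop :=
  forall e, 0 < e -> exists U, [/\ berk_open U, U z &
    forall z', U z' -> z' <> z ->
      `| sph_kernel (F z) (F z') / sph_kernel z z' - L | < e].

Definition fatou (P Q : {poly K}) (z : berkT) : Prop :=
  exists V, berk_nbhd z V /\
    infinite_set (BP `\` \bigcup_(n in [set n : nat | (1 <= n)%N])
                             (iter n (berk_act P Q) @` V)).

Definition julia (P Q : {poly K}) : set berkT :=
  [set z | BP z /\ ~ fatou P Q z].

End Berkovich.

(* Main.v *)
Require Import Defs.
From mathcomp Require Import all_boot all_order all_algebra.
From mathcomp Require Import boolp classical_sets functions cardinality reals.
From mathcomp Require Import ring lra.
Import Order.TTheory GRing.Theory Num.Theory.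
Local Open Scope ring_scope.

Module MA.
Local Open Scope ring_scope.

Section Real.
Variable R : realType.

Lemma bernoulli (h : R) n : 0 <= h -> 1 + n%:R * h <= (1 + h) ^+ n.
Proof.
move=> h0; elim: n => [|n IH]; first by rewrite mul0r addr0 expr0.
rewrite exprS -natr1.
have H1 : 0 <= (1 + h) by lra.
have : (1 + h) * (1 + n%:R * h) <= (1 + h) * (1 + h) ^+ n by rewrite ler_wpM2l.
have : 0 <= n%:R * h * h :> R by rewrite mulr_ge0 // mulr_ge0.
nra.
Qed.

Lemma pow_unbounded (r M : R) : 1 < r -> exists n, M < r ^+ n.
Proof.
move=> r1.
have h0 : 0 < r - 1 by lra.
have [n Hn] : exists n : nat, `|M| / (r - 1) < n%:R.
  exists (Num.Def.archi_bound (`|M| / (r - 1))); apply: archi_boundP.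
  by rewrite divr_ge0 // ltW.
exists n; have := @bernoulli (r - 1) n (ltW h0).
have : `|M| < n%:R * (r - 1) by rewrite -ltr_pdivrMr.
have : M <= `|M| by exact: ler_norm.
have -> : 1 + (r - 1) = r by ring.
set X := n%:R * (r - 1). lra.
Qed.

Lemma pow_small (a e : R) : 0 <= a < 1 -> 0 < e -> exists n, a ^+ n < e.
Proof.
move=> /andP[a0 a1] e0.
have [->|an0] := eqVneq a 0.
  by exists 1%N; rewrite expr1.
have ap : 0 < a by rewrite lt_def an0.
have a1' : 1 < a^-1 by rewrite invf_gt1.
have [n Hn] := pow_unbounded (a^-1) (e^-1) a1'; exists n.
rewrite exprVn in Hn.
rewrite -(invrK e) -[X in X < _]invrK ltf_pV2 ?posrE ?invr_gt0 ?exprn_gt0 //.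
Qed.


Lemma bern_up (h : R) n : 0 <= h <= 1 -> (1 + h) ^+ n <= 1 + (2 ^+ n - 1) * h.
Proof.
move=> /andP[h0 h1]; elim: n => [|n IH]; first by rewrite !expr0; lra.
rewrite !exprS.
have c1 : 1 <= (2:R) ^+ n by apply: exprn_ege1; lra.
have H1 : 0 <= (1 + h) by lra.
have : (1 + h) * (1 + h) ^+ n <= (1 + h) * (1 + (2 ^+ n - 1) * h) by rewrite ler_wpM2l.
set c := (2:R) ^+ n in c1 *.
have : (c - 1) * h * h <= (c - 1) * h by rewrite -[X in _ <= X]mulr1; apply: ler_wpM2l => //; rewrite mulr_ge0 //; lra.
nra.
Qed.

Lemma bern_down (h : R) n : 0 <= h <= 1 -> 1 - n%:R * h <= (1 - h) ^+ n.
Proof.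
move=> /andP[h0 h1]; elim: n => [|n IH]; first by rewrite mul0r subr0 expr0.
rewrite exprS -natr1.
have H1 : 0 <= (1 - h) by lra.
have : (1 - h) * (1 - n%:R * h) <= (1 - h) * (1 - h) ^+ n by rewrite ler_wpM2l.
have : 0 <= n%:R * h * h :> R by rewrite mulr_ge0 // mulr_ge0.
nra.
Qed.

Lemma near1 (eta : R) N : 0 < eta -> exists eps : R,
  [/\ 0 < eps, eps < 1, (1 + eps) ^+ N <= 1 + eta & 1 - eta <= (1 - eps) ^+ N].
Proof.
move=> e0.
pose c : R := 2 ^+ N + N%:R + 1.
have c1 : 1 <= 2 ^+ N :> R by apply: exprn_ege1; lra.
have cN : 0 <= N%:R :> R by [].
have cp : 0 < c by rewrite /c; lra.
pose m := Num.min eta 1.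
have m0 : 0 < m by rewrite /m lt_min e0 ltr01.
have m1 : m <= 1 by rewrite /m ge_min lexx orbT.
have me : m <= eta by rewrite /m ge_min lexx.
exists (m / c).
have ec : m / c * c = m by rewrite divfK // gt_eqF.
have e0' : 0 < m / c by rewrite divr_gt0.
have e1 : m / c <= 1 / 2.
  rewrite ler_pdivrMr //; have : 2 <= c by rewrite /c; lra. nra.
split => //; first lra.
- apply: (le_trans (bern_up (m / c) N _)); first by apply/andP; split; lra.
  have : (2 ^+ N - 1) * (m / c) <= c * (m / c).
    by apply: ler_wpM2r; [lra | rewrite /c; lra].
  rewrite [c * _]mulrC ec; lra.
- apply: (le_trans _ (bern_down (m / c) N _)); last by apply/andP; split; lra.
  have : N%:R * (m / c) <= c * (m / c).
    by apply: ler_wpM2r; [lra | rewrite /c; lra].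
  rewrite [c * _]mulrC ec; lra.
Qed.


Lemma pow_beats_lin (r : R) : 1 < r -> exists n, (n.+1)%:R < r ^+ n.
Proof.
move=> r1.
have h0 : 0 < r - 1 by lra.
have h2 : 0 < (r - 1) ^+ 2 by rewrite exprn_gt0.
have [n Hn] : exists n : nat, 2 / (r - 1) ^+ 2 < n%:R.
  exists (Num.Def.archi_bound (2 / (r - 1) ^+ 2)); apply: archi_boundP.
  by rewrite divr_ge0 // ltW.
have Hn' : 2 < n%:R * (r - 1) ^+ 2 by rewrite -ltr_pdivrMr.
exists (n + n)%N.
have B := @bernoulli (r - 1) n (ltW h0).
rewrite (_ : 1 + (r - 1) = r) in B; last by ring.
rewrite exprD -addn1 !natrD.
have B0 : 0 <= 1 + n%:R * (r - 1).
  by rewrite addr_ge0 // mulr_ge0 // ltW.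
have : (1 + n%:R * (r - 1)) * (1 + n%:R * (r - 1)) <= r ^+ n * r ^+ n.
  by rewrite ler_pM.
have nn : 0 <= n%:R :> R by [].
rewrite expr2 in Hn'.
nra.
Qed.

End Real.

End MA.
Import MA.

Module MB.
Local Open Scope ring_scope.
Set Implicit Arguments. Unset Strict Implicit.

Section Abs.
Variables (R : realType) (K : closedFieldType) (absv : K -> R).
Hypothesis Hv : is_Cv_abs absv.

Let ge0 := absv_ge0 Hv.
Let aM := absvM Hv.
Let aU := absv_ultra Hv.

Lemma absv0 : absv 0 = 0.
Proof. by apply/(absv_eq0 Hv). Qed.

Lemma absv1 : absv 1 = 1.
Proof.
have h : absv 1 = absv 1 * absv 1 by rewrite -aM mulr1.
have : absv 1 != 0 by apply/eqP => /(absv_eq0 Hv) /eqP; rewrite oner_eq0.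
move: h (ge0 1); nra.
Qed.

Lemma absvN x : absv (- x) = absv x.
Proof.
have h : absv (-1) * absv (-1) = 1 by rewrite -aM mulrNN mulr1 absv1.
have : absv (-1) = 1 by move: h (ge0 (-1)); nra.
by move=> h1; rewrite -mulN1r aM h1 mul1r.
Qed.

Lemma absvB x y : absv (x - y) = absv (y - x).
Proof. by rewrite -absvN opprB. Qed.

Lemma absv_le x y : absv (x + y) <= Num.max (absv x) (absv y).
Proof. exact: aU. Qed.

Lemma absv_le_add x y : absv (x + y) <= absv x + absv y.
Proof.
apply: (le_trans (aU x y)); rewrite ge_max; apply/andP; split.
- by rewrite lerDl.
- by rewrite lerDr.
Qed.

Lemma absv_natr n : absv n%:R <= 1.
Proof.
elim: n => [|n IH]; first by rewrite absv0.
rewrite -natr1; apply: (le_trans (aU _ _)); rewrite ge_max IH absv1 lexx //.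
Qed.

Lemma absv_ultra_eq x y : absv y < absv x -> absv (x + y) = absv x.
Proof.
move=> lt; apply/eqP; rewrite eq_le; apply/andP; split.
  by apply: (le_trans (aU _ _)); rewrite ge_max lexx (ltW lt).
have := aU (x + y) (- y); rewrite addrK absvN.
rewrite le_max => /orP[] // h; move: (lt_le_trans lt h); rewrite ltxx.
done.
Qed.

Lemma absv_max3 x y : absv (x - y) <= Num.max (absv x) (absv y).
Proof. by have := aU x (- y); rewrite absvN. Qed.

Lemma absvV x : absv (x^-1) = (absv x)^-1.
Proof.
have [->|x0] := eqVneq x 0; first by rewrite invr0 absv0 invr0.
have : absv x * absv (x^-1) = 1 by rewrite -aM mulfV // absv1.
have : absv x != 0 by apply/eqP => /(absv_eq0 Hv) /eqP; rewrite (negbTE x0).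
move=> h1 h2; apply: (mulfI h1); by rewrite h2 divff.
Qed.

Lemma absvX x n : absv (x ^+ n) = absv x ^+ n.
Proof.
elim: n => [|n IH]; first by rewrite !expr0 absv1.
by rewrite !exprS aM IH.
Qed.

Lemma absv_prod (I : Type) (r : seq I) (F : I -> K) :
  absv (\prod_(i <- r) F i) = \prod_(i <- r) absv (F i).
Proof. by apply: (big_morph absv aM absv1). Qed.

Lemma value_dense (t lam : R) : 0 < t -> 0 < lam < 1 ->
  exists u : K, lam * t < absv u <= t.
Proof.
move=> t0 /andP[l0 l1].
have [pi [pi0 pi1]] := absv_nontriv Hv.
have [p /andP[p0 p1]] : exists p : K, 0 < absv p < 1.
  have := ge0 pi; rewrite le_eqVlt eq_sym (negbTE (introN eqP pi0)) /= => pp.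
  have [lt1|gt1] := ltP (absv pi) 1.
    by exists pi; rewrite pp lt1.
  exists (pi^-1); rewrite absvV invr_gt0 pp invf_lt1 //.
  by rewrite lt_def gt1 andbT; apply/eqP => h; apply: pi1.
have [n hn] := @pow_small R lam (absv p) (introT andP (conj (ltW l0) l1)) p0.
pose P : {poly K} := 'X^n - p%:P.
have [n0|n0] := posnP n.
  by move: hn; rewrite n0 expr0 => h; move: (lt_trans h p1); rewrite ltxx.
have sP : size P != 1%N.
  by rewrite /P size_XnsubC // eqSS -lt0n.
have [rho hrho] := closed_rootP P sP.
have rn : absv rho ^+ n = absv p.
  move: hrho; rewrite /root /P !hornerE subr_eq0 => /eqP <-; by rewrite absvX.
set a := absv rho in rn.
have a0 : 0 <= a := ge0 rho.
have al : lam < a.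
  rewrite ltNge; apply/negP => h.
  have : a ^+ n <= lam ^+ n by rewrite lerXn2r // nnegrE ltW.
  by rewrite rn; move/(lt_le_trans hn); rewrite ltxx.
have a1 : a < 1.
  rewrite ltNge; apply/negP => h.
  have : 1 <= a ^+ n by apply: exprn_ege1.
  by rewrite rn => /(lt_le_trans p1); rewrite ltxx.
have ap : 0 < a by apply: (lt_trans l0).
have ai : 1 < a^-1 by rewrite invf_gt1.
have [j hj] := @pow_unbounded R (a^-1) t ai.
have taj : t * a ^+ j < 1.
  move: hj; rewrite exprVn -(ltr_pM2r (exprn_gt0 j ap)) mulVf //.
  by rewrite gt_eqF // exprn_gt0.
have taj0 : 0 < t * a ^+ j by rewrite mulr_gt0 // exprn_gt0.
have exk : exists k, a ^+ k <= t * a ^+ j.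
  have [k hk] := @pow_small R a _ (introT andP (conj a0 a1)) taj0; exists k; exact: ltW.
case: (ex_minnP exk) => k hk kmin.
have k0 : (0 < k)%N.
  rewrite lt0n; apply/negP => /eqP k0; move: hk; rewrite k0 expr0 => h.
  by move: (le_lt_trans h taj); rewrite ltxx.
have hk1 : t * a ^+ j < a ^+ k.-1.
  rewrite ltNge; apply/negP => /kmin; rewrite leqNgt; apply/negP/negPn.
  by rewrite prednK.
have rho0 : rho != 0.
  by apply/eqP => r0; move: ap; rewrite /a r0 absv0 ltxx.
exists (rho ^+ k / rho ^+ j).
rewrite aM absvV !absvX -/a.
have aj : 0 < a ^+ j by rewrite exprn_gt0.
apply/andP; split.
- rewrite ltr_pdivlMr //.
  have -> : a ^+ k = a * a ^+ k.-1 by rewrite -exprS prednK.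
  have : lam * (t * a ^+ j) < a * (t * a ^+ j) by rewrite ltr_pM2r.
  have : a * (t * a ^+ j) < a * a ^+ k.-1 by rewrite ltr_pM2l.
  rewrite mulrA; lra.
- by rewrite ler_pdivrMr.
Qed.

End Abs.

End MB.
Import MB.

Module MC.
Local Open Scope ring_scope.
Set Implicit Arguments. Unset Strict Implicit.

Section Semi.
Variables (R : realType) (K : closedFieldType) (absv : K -> R).
Hypothesis Hv : is_Cv_abs absv.
Variable s : {poly K} -> R.
Hypothesis Hs : is_mseminorm absv s.

Lemma s_ge0 p : 0 <= s p. Proof. by case: Hs. Qed.
Lemma sM p q : s (p * q) = s p * s q. Proof. by case: Hs. Qed.
Lemma sD p q : s (p + q) <= s p + s q. Proof. by case: Hs. Qed.
Lemma sC c : s c%:P = absv c. Proof. by case: Hs. Qed.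

Lemma s0 : s 0 = 0. Proof. by rewrite -polyC0 sC absv0. Qed.
Lemma s1 : s 1 = 1. Proof. by rewrite -polyC1 sC absv1. Qed.
Lemma sN p : s (- p) = s p.
Proof. by rewrite -mulN1r (_ : -1 = (-1)%:P) ?sM ?sC ?absvN ?absv1 ?mul1r // polyCN polyC1. Qed.
Lemma sX p n : s (p ^+ n) = s p ^+ n.
Proof. elim: n => [|n IH]; first by rewrite !expr0 s1. by rewrite !exprS sM IH. Qed.
Lemma s_prod (I : Type) (r : seq I) (F : I -> {poly K}) :
  s (\prod_(i <- r) F i) = \prod_(i <- r) s (F i).
Proof. by apply: (big_morph s sM s1). Qed.
Lemma s_sum (I : Type) (r : seq I) (F : I -> {poly K}) :
  s (\sum_(i <- r) F i) <= \sum_(i <- r) s (F i).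
Proof.
elim: r => [|i r IH]; first by rewrite !big_nil s0.
rewrite !big_cons; apply: (le_trans (sD _ _)); by rewrite lerD2l.
Qed.
Lemma s_muln p k : s (p *+ k) <= s p.
Proof.
rewrite -mulr_natl -polyC_natr sM sC -[X in _ <= X]mul1r ler_wpM2r ?s_ge0 //.
exact: absv_natr.
Qed.

Lemma s_ultra p q : s (p + q) <= Num.max (s p) (s q).
Proof.
set m := Num.max (s p) (s q).
have m0 : 0 <= m by rewrite le_max s_ge0.
have bound n : s (p + q) ^+ n <= n.+1%:R * m ^+ n.
  rewrite -sX exprDn; apply: (le_trans (s_sum _ _)).
  apply: (@le_trans _ _ (\sum_(i < n.+1) m ^+ n)); last first.
    by rewrite sumr_const card_ord mulr_natl.
  apply: ler_sum => i _; apply: (le_trans (s_muln _ _)).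
  rewrite sM !sX.
  have -> : m ^+ n = m ^+ (n - i) * m ^+ i by rewrite -exprD subnK // -ltnS.
  apply: ler_pM; rewrite ?exprn_ge0 ?s_ge0 //; apply: lerXn2r;
    rewrite ?nnegrE ?s_ge0 // /m le_max lexx ?orbT //.
rewrite leNgt; apply/negP => lt.
have [m0'|mp] := eqVneq m 0.
  by have := bound 1%N; rewrite m0' !expr1 mulr0 => h; move: lt; rewrite m0'; lra.
have mpos : 0 < m by rewrite lt_def mp m0.
have r1 : 1 < s (p + q) / m by rewrite ltr_pdivlMr // mul1r.
have [n Hn] := @pow_beats_lin R _ r1.
move: Hn; rewrite expr_div_n ltr_pdivlMr ?exprn_gt0 //.
by move/(lt_le_trans)/(_ (bound n)); rewrite ltxx.
Qed.


Lemma s_ultra_eq p q : s q < s p -> s (p + q) = s p.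
Proof.
move=> lt; apply/eqP; rewrite eq_le; apply/andP; split.
  by apply: (le_trans (s_ultra _ _)); rewrite ge_max lexx (ltW lt).
have := s_ultra (p + q) (- q); rewrite addrK sN.
rewrite le_max => /orP[] // h; move: (lt_le_trans lt h); rewrite ltxx.
done.
Qed.

Lemma s_typeI a : s ('X - a%:P) = 0 -> forall g, s g = absv g.[a].
Proof.
move=> h0 g.
have : root (g - g.[a]%:P) a by rewrite /root !hornerE subrr.
case/factor_theorem => q hq.
have eg : g = g.[a]%:P + q * ('X - a%:P) by rewrite -hq addrC subrK.
apply/eqP; rewrite eq_le; apply/andP; split.
  rewrite {1}eg; apply: (le_trans (sD _ _)); by rewrite sM h0 mulr0 addr0 sC.
rewrite -sC (_ : g.[a]%:P = g - q * ('X - a%:P)); last by rewrite {2}eg addrK.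
apply: (le_trans (sD _ _)); by rewrite sN sM h0 mulr0 addr0.
Qed.

Lemma archi_inv (e : R) : 0 < e -> exists N : nat, forall n, (N <= n)%N -> (n.+1%:R)^-1 < e.
Proof.
move=> e0.
exists (Num.Def.archi_bound (e^-1)) => n hn.
have ei : 0 <= e^-1 by rewrite invr_ge0 ltW.
have h := archi_boundP ei.
have h2 : e^-1 < n.+1%:R.
  apply: (lt_le_trans h); rewrite ler_nat; exact: (leq_trans hn).
rewrite -[e]invrK ltf_pV2 ?posrE ?invr_gt0 //.
Qed.

Lemma s_lin_lb : (forall a, s ('X - a%:P) <> 0) ->
  exists rho, 0 < rho /\ forall c, rho <= s ('X - c%:P).
Proof.
move=> nI.
apply: contrapT => H.
have H' : forall n : nat, exists c, s ('X - c%:P) < (n.+1%:R)^-1.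
  move=> n; apply: contrapT => H2; apply: H.
  exists (n.+1%:R)^-1; split; first by rewrite invr_gt0.
  move=> c; rewrite leNgt; apply/negP => lt; apply: H2; by exists c.
have [u hu] := choice H'.
have cau : forall e, 0 < e -> exists N, forall m n, (N <= m)%N -> (N <= n)%N ->
    absv (u m - u n) < e.
  move=> e e0; have [N hN] := @archi_inv (e / 2) (divr_gt0 e0 (ltr0Sn _ 1)).
  exists N => m n hm hn.
  have -> : u m - u n = (('X - (u n)%:P) - ('X - (u m)%:P)).[0].
    by rewrite !hornerE; ring.
  rewrite (_ : (('X - (u n)%:P) - ('X - (u m)%:P)) = (u m - u n)%:P); last first.
    by rewrite polyCB; ring.
  rewrite hornerC -sC (_ : (u m - u n)%:P = ('X - (u n)%:P) + - ('X - (u m)%:P)); last first.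
    by rewrite polyCB; ring.
  apply: (le_lt_trans (sD _ _)); rewrite sN.
  have := hu m; have := hu n; have := hN m hm; have := hN n hn.
  have : e / 2 + e / 2 = e by field.
  set a := n.+1%:R^-1; set b := m.+1%:R^-1; set c := e / 2. lra.
have [l hl] := absv_complete Hv cau.
have l0 : s ('X - l%:P) = 0.
  apply/eqP; rewrite eq_le s_ge0 andbT.
  apply/ler_addgt0Pr => e e0; rewrite add0r.
  have [N1 hN1] := hl (e / 2) (divr_gt0 e0 (ltr0Sn _ 1)).
  have [N2 hN2] := @archi_inv (e / 2) (divr_gt0 e0 (ltr0Sn _ 1)).
  set n := maxn N1 N2.
  have := hN1 n (leq_maxl _ _); have := hN2 n (leq_maxr _ _); have := hu n.
  rewrite (_ : 'X - l%:P = ('X - (u n)%:P) + (u n - l)%:P); last by rewrite polyCB; ring.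
  have := sD ('X - (u n)%:P) (u n - l)%:P; rewrite sC.
  have : e / 2 + e / 2 = e by field.
  set a := n.+1%:R^-1; set c := e / 2. lra.
exact: (nI l).
Qed.

End Semi.

End MC.
Import MC.

Module MD.
Local Open Scope classical_set_scope.
Local Open Scope ring_scope.
Set Implicit Arguments. Unset Strict Implicit.

Lemma prod_const_seq (R : realType) (I : Type) (r : seq I) (c : R) :
  \prod_(i <- r) c = c ^+ size r.
Proof. elim: r => [|i r IH]; by rewrite ?big_nil ?big_cons ?IH ?exprS. Qed.

Lemma exp_anti (R : realType) (c : R) m n : 0 <= c <= 1 -> (m <= n)%N -> c ^+ n <= c ^+ m.
Proof.
move=> /andP[c0 c1] mn; rewrite -(subnK mn) exprD -[X in _ <= X]mul1r.
by apply: ler_wpM2r; rewrite ?exprn_ge0 ?exprn_ile1.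
Qed.

Lemma exp_mono (R : realType) (c : R) m n : 1 <= c -> (m <= n)%N -> c ^+ m <= c ^+ n.
Proof.
move=> c1 mn; rewrite -(subnK mn) exprD -[X in X <= _]mul1r.
apply: ler_wpM2r; rewrite ?exprn_ge0 ?exprn_ege1 //; lra.
Qed.

Section Dens.
Variables (R : realType) (K : closedFieldType) (absv : K -> R).
Hypothesis Hv : is_Cv_abs absv.
Variable s : {poly K} -> R.
Hypothesis Hs : is_mseminorm absv s.
Hypothesis HnI : forall a, s ('X - a%:P) <> 0.

Lemma near_inf (th : R) : 1 < th -> exists c, 0 < s ('X - c%:P) /\
   forall c', s ('X - c%:P) <= th * s ('X - c'%:P).
Proof.
move=> th1.
have [rho [rho0 hrho]] := s_lin_lb Hv Hs HnI.
pose S := [set r | exists c, r = s ('X - c%:P)].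
have S0 : (S !=set0)%classic by exists (s ('X - 0%:P)); exists 0.
have lbS : lbound S rho by move=> r [c ->].
have i0 : rho <= inf S by apply: lb_le_inf.
have hlb : has_lbound S by exists rho.
have : inf S < th * inf S.
  have : 0 < inf S by apply: lt_le_trans i0.
  nra.
case/(inf_lt S0) => r [c ->] hc.
exists c; split; first by apply: lt_le_trans (hrho c).
move=> c'; apply: (le_trans (ltW hc)); rewrite ler_pM2l; last lra.
by apply: ge_inf => //; exists c'.
Qed.

Lemma approx (A : seq K) (lam th : R) : 0 < lam < 1 -> 1 < th ->
  exists x, forall a, a \in A ->
    lam ^+ (size A) * s ('X - a%:P) <= absv (x - a) <= th * s ('X - a%:P).
Proof.
move=> /andP[l0 l1] th1.
have [c [t0 hc]] := near_inf th1.
set t := s ('X - c%:P) in t0 hc.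
pose B := [seq a <- A | absv (c - a) <= t].
pose m := size B.
have mA : (m <= size A)%N by rewrite /m /B size_filter count_size.
have [x [xc xB]] : exists x, absv (x - c) <= t /\
    forall a, a \in B -> lam ^+ m * t <= absv (x - a).
  have [m0|mpos] := posnP m.
    exists c; split; first by rewrite subrr (absv0 Hv) ltW.
    move=> a; have : B = [::] by apply/eqP; rewrite -size_eq0 -/m m0.
    by move=> ->.
  have [u /andP[u1 u2]] := value_dense Hv t0 (introT andP (conj l0 l1)).
  pose P := \prod_(a <- B) ('X - a%:P) - (u ^+ m)%:P.
  have sP : size P = m.+1.
    have sz : size (\prod_(a <- B) ('X - a%:P)) = m.+1 := size_prod_XsubC B id.
    rewrite /P size_polyDl sz //.
    rewrite size_opp -/m ltnS.
    by apply: leq_trans (size_polyC_leq1 _) mpos.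
  have [x hx] : exists x, root P x by apply/closed_rootP; rewrite sP eqSS -lt0n.
  have Pabs : \prod_(a <- B) absv (x - a) = absv u ^+ m.
    move: hx; rewrite /root /P hornerD hornerN hornerC horner_prod subr_eq0.
    move/eqP => h; rewrite -(absvX Hv) -h (absv_prod Hv).
    by apply: eq_bigr => a _; rewrite hornerXsubC.
  have ge0 := absv_ge0 Hv.
  have xc : absv (x - c) <= t.
    rewrite leNgt; apply/negP => lt.
    have : \prod_(a <- B) absv (x - a) = absv (x - c) ^+ m.
      rewrite -prod_const_seq; apply: eq_big_seq => a aB.
      rewrite (_ : x - a = (x - c) + (c - a)); last by ring.
      apply: (absv_ultra_eq Hv); apply: le_lt_trans lt.
      by move: aB; rewrite mem_filter => /andP[].
    rewrite Pabs => e.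
    have : t ^+ m < absv (x - c) ^+ m by rewrite ltrXn2r // ?ltW // -lt0n.
    rewrite -e => h; have : absv u ^+ m <= t ^+ m by apply: lerXn2r => //; rewrite nnegrE ?ge0 ?(ltW t0).
    by move/(lt_le_trans h); rewrite ltxx.
  exists x; split => // a0 a0B.
  have hr : \prod_(a <- rem a0 B) absv (x - a) <= t ^+ m.-1.
    rewrite -(size_rem a0B) -prod_const_seq big_seq [X in _ <= X]big_seq.
    apply: ler_prod => a ha; rewrite ge0 /=.
    have aB : a \in B by apply: (mem_rem ha).
    rewrite (_ : x - a = (x - c) + (c - a)); last by ring.
    apply: (le_trans (absv_le Hv _ _)); rewrite ge_max xc /=.
    by move: aB; rewrite mem_filter => /andP[].
  have := Pabs; rewrite (big_rem _ a0B) /= => e.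
  have lu : (lam * t) ^+ m <= absv u ^+ m.
    by apply: lerXn2r; rewrite ?nnegrE ?ge0 ?(ltW u1) // mulr_ge0 // ltW.
  have tm : 0 < t ^+ m.-1 by rewrite exprn_gt0.
  rewrite -(ler_pM2r tm); apply: (le_trans _ (le_trans lu _)).
    by rewrite exprMn -mulrA -exprS prednK.
  by rewrite -e ler_wpM2l.
exists x => a aA.
have sle : s ('X - a%:P) <= Num.max t (absv (c - a)).
  rewrite (_ : 'X - a%:P = ('X - c%:P) + (c - a)%:P); last by rewrite polyCB; ring.
  by rewrite -(sC Hs) (s_ultra Hv Hs).
have s0 := s_ge0 Hs ('X - a%:P).
have lamN : lam ^+ size A <= 1 by rewrite exprn_ile1 // ltW.
have lam0 : 0 <= lam ^+ size A by rewrite exprn_ge0 // ltW.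
case: (leP (absv (c - a)) t) => ca.
- have aB : a \in B by rewrite mem_filter ca aA.
  have := xB a aB.
  have lm : lam ^+ size A <= lam ^+ m by apply: exp_anti => //; rewrite ltW ?l1 //= ltW.
  have st : s ('X - a%:P) <= t by apply: (le_trans sle); rewrite ge_max lexx ca.
  move=> h1; apply/andP; split.
    apply: le_trans h1; apply: (@le_trans _ _ (lam ^+ size A * t)).
      by rewrite ler_wpM2l.
    by rewrite ler_wpM2r // ltW.
  apply: (le_trans _ (hc a)).
  rewrite (_ : x - a = (x - c) + (c - a)); last by ring.
  apply: (le_trans (absv_le Hv _ _)); by rewrite ge_max xc ca.
- have e1 : absv (x - a) = absv (c - a).
    rewrite (_ : x - a = (c - a) + (x - c)); last by ring.
    by apply: absv_ultra_eq => //; apply: le_lt_trans ca.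
  have e2 : s ('X - a%:P) = absv (c - a).
    rewrite (_ : 'X - a%:P = (c - a)%:P + ('X - c%:P)); last by rewrite polyCB; ring.
    by rewrite (s_ultra_eq Hv Hs) (sC Hs) // (sC Hs).
  rewrite e1 e2; apply/andP; split.
    by rewrite -[X in _ <= X]mul1r ler_wpM2r ?(absv_ge0 Hv).
  by rewrite -[X in X <= _]mul1r ler_wpM2r ?(absv_ge0 Hv) // ltW.
Qed.

End Dens.

End MD.
Import MD.

Module ME.
Local Open Scope classical_set_scope.
Local Open Scope ring_scope.
Set Implicit Arguments. Unset Strict Implicit.

Section Dens2.
Variables (R : realType) (K : closedFieldType) (absv : K -> R).
Hypothesis Hv : is_Cv_abs absv.
Variable s : {poly K} -> R.
Hypothesis Hs : is_mseminorm absv s.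
Hypothesis HnI : forall a, s ('X - a%:P) <> 0.

Definition goodeta (eta : R) (t : {poly K} * R * R) :=
  t.1.2 < s t.1.1 * (1 - eta) /\ s t.1.1 * (1 + eta) < t.2.

Lemma goodeta_mono e1 e2 t : 0 < e2 <= e1 -> goodeta e1 t -> goodeta e2 t.
Proof.
move=> /andP[e20 e21] [h1 h2]; have s0 := s_ge0 Hs t.1.1; split.
- apply: (lt_le_trans h1); apply: ler_wpM2l => //; lra.
- apply: le_lt_trans h2; apply: ler_wpM2l => //; lra.
Qed.

Lemma eta_exists (l : seq ({poly K} * R * R)) :
  (forall t, t \in l -> t.1.2 < s t.1.1 < t.2) ->
  exists eta, 0 < eta /\ forall t, t \in l -> goodeta eta t.
Proof.
elim: l => [|t l IH] H.
  by exists 1; split => // t; rewrite in_nil.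
have [e [e0 he]] : exists e, 0 < e /\ forall t', t' \in l -> goodeta e t'.
  by apply: IH => t' ht'; apply: H; rewrite in_cons ht' orbT.
have /andP[a1 a2] := H t (mem_head _ _).
have s0 := s_ge0 Hs t.1.1.
set sg := s t.1.1 in a1 a2 s0.
pose e' := Num.min ((sg - t.1.2) / (sg + 1)) ((t.2 - sg) / (sg + 1)).
have sp : 0 < sg + 1 by lra.
have e'0 : 0 < e' by rewrite lt_min !divr_gt0 //; lra.
have ge' : goodeta e' t.
  have m1 : e' * (sg + 1) <= sg - t.1.2.
    by rewrite -ler_pdivlMr // ge_min lexx.
  have m2 : e' * (sg + 1) <= t.2 - sg.
    by rewrite -ler_pdivlMr // ge_min lexx orbT.
  rewrite /goodeta -/sg; split; nra.
exists (Num.min e e'); split; first by rewrite lt_min e0 e'0.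
move=> t'; rewrite in_cons => /orP[/eqP ->|ht'].
  by apply: (goodeta_mono _ ge'); rewrite lt_min e0 e'0 ge_min lexx orbT.
by apply: (goodeta_mono _ (he _ ht')); rewrite lt_min e0 e'0 ge_min lexx.
Qed.


Definition rts (g : {poly K}) : seq K := sval (closed_field_poly_normal g).
Lemma rtsE g : g = lead_coef g *: \prod_(z <- rts g) ('X - z%:P).
Proof. exact: (svalP (closed_field_poly_normal g)). Qed.

Lemma flat_sub (l : seq ({poly K} * R * R)) t : t \in l ->
  {subset rts t.1.1 <= flatten [seq rts t.1.1 | t <- l]} /\
  (size (rts t.1.1) <= size (flatten [seq rts t.1.1 | t <- l]))%N.
Proof.
case/splitPr => l1 l2.
rewrite map_cat flatten_cat /= size_cat size_cat; split.
  by move=> a ha'; rewrite mem_cat mem_cat ha' orbT.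
by rewrite addnCA leq_addr.
Qed.

Lemma dens (l : seq ({poly K} * R * R)) :
  (forall t, t \in l -> t.1.2 < s t.1.1 < t.2) ->
  exists x, forall t, t \in l -> t.1.2 < absv (t.1.1).[x] < t.2.
Proof.
move=> H.
have [eta [eta0 heta]] := eta_exists H.
pose A := flatten [seq rts t.1.1 | t <- l].
pose N := size A.
have [eps [e0 e1 eup edn]] := @near1 R eta (N * N)%N eta0.
have lm : 0 < 1 - eps < 1 by apply/andP; split; lra.
have th1 : 1 < 1 + eps by lra.
have [x hx] := approx Hv Hs HnI A lm th1.
exists x => t tl.
have [ha hb] := heta t tl.
set g := t.1.1 in ha hb *.
have [gA dN] := flat_sub tl.
set d := size (rts g) in dN.
have ge0 := absv_ge0 Hv.
have sge : s g = absv (lead_coef g) * \prod_(z <- rts g) s ('X - z%:P).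
  rewrite {1}(rtsE g) -mul_polyC (sM Hs) (sC Hs) (s_prod Hv Hs) //.
have gx : absv g.[x] = absv (lead_coef g) * \prod_(z <- rts g) absv (x - z).
  rewrite {1}(rtsE g) hornerZ (absvM Hv) horner_prod (absv_prod Hv).
  by congr (_ * _); apply: eq_bigr => z _; rewrite hornerXsubC.
have lc0 := ge0 (lead_coef g).
have lo : (1 - eps) ^+ (N * N)%N * \prod_(z <- rts g) s ('X - z%:P)
          <= \prod_(z <- rts g) absv (x - z).
  apply: (@le_trans _ _ (\prod_(z <- rts g) ((1 - eps) ^+ N * s ('X - z%:P)))).
    rewrite big_split /= prod_const_seq -exprM -/d.
    apply: ler_wpM2r; first by apply: prodr_ge0 => z _; exact: s_ge0 Hs _.
    apply: exp_anti; first by apply/andP; split; lra.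
    by rewrite leq_mul2l dN orbT.
  rewrite big_seq [X in _ <= X]big_seq; apply: ler_prod => z zg.
  have /andP[h1 h2] := hx z (gA z zg).
  rewrite h1 andbT mulr_ge0 ?(s_ge0 Hs) // ?exprn_ge0 //; lra.
have up : \prod_(z <- rts g) absv (x - z)
          <= (1 + eps) ^+ (N * N)%N * \prod_(z <- rts g) s ('X - z%:P).
  apply: (@le_trans _ _ (\prod_(z <- rts g) ((1 + eps) * s ('X - z%:P)))).
    rewrite big_seq [X in _ <= X]big_seq; apply: ler_prod => z zg.
    have /andP[h1 h2] := hx z (gA z zg).
    by rewrite h2 andbT ge0.
  rewrite big_split /= prod_const_seq -/d.
  apply: ler_wpM2r; first by apply: prodr_ge0 => z _; exact: s_ge0 Hs _.
  apply: exp_mono; first lra.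
  apply: (leq_trans dN); rewrite /N; case: (size _) => // n; by rewrite leq_pmulr.
set P := \prod_(z <- rts g) s ('X - z%:P) in sge lo up.
set Q := \prod_(z <- rts g) absv (x - z) in gx lo up.
set L := absv (lead_coef g) in sge gx lc0.
have P0 : 0 <= P by apply: prodr_ge0 => z _; exact: s_ge0 Hs _.
rewrite gx; apply/andP; split.
- apply: (lt_le_trans ha); rewrite sge -mulrA; apply: ler_wpM2l => //.
  apply: le_trans lo; rewrite mulrC; apply: ler_wpM2r => //; lra.
- apply: le_lt_trans hb; rewrite sge -mulrA; apply: ler_wpM2l => //.
  apply: (le_trans up); rewrite mulrC; apply: ler_wpM2l => //.
Qed.

End Dens2.

End ME.
Import ME.

Module MF.
Local Open Scope classical_set_scope.
Local Open Scope ring_scope.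
Set Implicit Arguments. Unset Strict Implicit.

Section Topo.
Variables (R : realType) (K : closedFieldType) (absv : K -> R).
Hypothesis Hv : is_Cv_abs absv.

Lemma typeI_A1 (x : K) : A1 absv (fun g => absv g.[x]).
Proof.
split.
- by move=> p; have := absv_ge0 Hv p.[x].
- by move=> p q; rewrite hornerM (absvM Hv).
- by move=> p q; rewrite hornerD (absv_le_add Hv).
- by move=> c; rewrite hornerC.
Qed.

Lemma BP_open : berk_open absv (BP absv).
Proof.
split => //; split.
  split; first by move=> s.
  by move=> s Ss; exists [::]; split => // s' _ _.
move=> _; split; first by move=> s [].
move=> I O _ _; exists 0%N.
have f : 'I_0 -> I by case.
exists f => s [Ss nSs]; by exfalso; apply: nSs.
Qed.

Lemma chordal_ge0 x y : 0 <= chordal absv x y.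
Proof.
have ge0 := absv_ge0 Hv.
case: x => [a|]; case: y => [b|] //=;
  rewrite ?divr_ge0 ?mulr_ge0 ?le_max ?ler01 //.
Qed.

Lemma chordal_le1 x y : chordal absv x y <= 1.
Proof.
have ge0 := absv_ge0 Hv.
have m1 a : 1 <= Num.max 1 (absv a) by rewrite le_max lexx.
have m0 a : 0 < Num.max 1 (absv a) by apply: lt_le_trans (m1 a).
case: x => [a|]; case: y => [b|] //=.
- rewrite ler_pdivrMr ?mulr_gt0 // mul1r.
  apply: (le_trans (absv_max3 Hv a b)); rewrite ge_max; apply/andP; split.
    have h1 : absv a <= Num.max 1 (absv a) by rewrite le_max lexx orbT.
    have := ler_pM (ge0 a) ler01 h1 (m1 b); by rewrite mulr1.
  have h1 : absv b <= Num.max 1 (absv b) by rewrite le_max lexx orbT.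
  have := ler_pM ler01 (ge0 b) (m1 a) h1; by rewrite mul1r.
- by rewrite ler_pdivrMr // mul1r.
- by rewrite ler_pdivrMr // mul1r.
Qed.

Definition CE (U V : set (berkT R K)) : set R :=
  [set c | exists x y, [/\ U (typeI_pt absv x), V (typeI_pt absv y) & c = chordal absv x y]].

Lemma CE_ub U V : ubound (CE U V) 1.
Proof. by move=> c [x [y [_ _ ->]]]; exact: chordal_le1. Qed.

Lemma supCE_ge U V c : CE U V c -> c <= sup (CE U V).
Proof.
move=> hc; apply: sup_upper_bound => //; split; first by exists c.
by exists 1; exact: CE_ub.
Qed.

Lemma supCE_01 U V : 0 <= sup (CE U V) <= 1.
Proof.
have [[c hc]|E0] := pselect (CE U V !=set0).
  apply/andP; split.
    apply: le_trans (supCE_ge hc); case: hc => x [y [_ _ ->]]; exact: chordal_ge0.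
  by apply: ge_sup; [exists c | exact: CE_ub].
rewrite (_ : CE U V = set0) ?sup0 ?lexx ?ler01 //.
apply/funext => c; apply/propext; split => // hc; apply: E0; by exists c.
Qed.

Definition KS (z w : berkT R K) : set R :=
  [set r | exists U V, [/\ berk_open absv U, U z, berk_open absv V, V w &
         r = sup (CE U V)]].

Lemma kernelE z w : sph_kernel absv z w = inf (KS z w).
Proof. by []. Qed.

Lemma kernel_le1 z w : sph_kernel absv z w <= 1.
Proof.
rewrite kernelE.
have [[r hr]|S0] := pselect (KS z w !=set0).
  have lb : has_lbound (KS z w).
    by exists 0 => r' [U [V [_ _ _ _ ->]]]; have /andP[] := supCE_01 U V.
  apply: (le_trans (ge_inf lb hr)).
  by case: hr => U [V [_ _ _ _ ->]]; have /andP[] := supCE_01 U V.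
rewrite (_ : KS z w = set0) ?inf0 ?ler01 //.
apply/funext => c; apply/propext; split => // hc; apply: S0; by exists c.
Qed.

Lemma kernel_ge z w d :
  (exists U V, [/\ berk_open absv U, U z, berk_open absv V & V w]) ->
  (forall U V, berk_open absv U -> U z -> berk_open absv V -> V w ->
     exists c, CE U V c /\ d <= c) ->
  d <= sph_kernel absv z w.
Proof.
move=> [U0 [V0 [o1 h1 o2 h2]]] H; rewrite kernelE; apply: lb_le_inf.
  by exists (sup (CE U0 V0)), U0, V0.
move=> r [U [V [oU hU oV hV ->]]].
have [c [hc dc]] := H U V oU hU oV hV.
exact: le_trans dc (supCE_ge hc).
Qed.

Lemma dens_open s : A1 absv s -> (forall a, s ('X - a%:P) <> 0) ->
  forall U, berk_open absv U -> U (Some s) ->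
  forall l' : seq ({poly K} * R * R), (forall t, t \in l' -> t.1.2 < s t.1.1 < t.2) ->
  exists x, U (typeI_pt absv (Some x)) /\
            forall t, t \in l' -> t.1.2 < absv (t.1.1).[x] < t.2.
Proof.
move=> Hs HnI U [_ [[_ hA] _]] Us l' hl'.
have [l [hl1 hl2]] := hA s Us.
have hall : forall t, t \in l ++ l' -> t.1.2 < s t.1.1 < t.2.
  by move=> t; rewrite mem_cat => /orP[/hl1|/hl'].
have [x hx] := dens Hv Hs HnI hall.
exists x; split.
  apply: hl2; first exact: typeI_A1.
  by move=> t ht; apply: hx; rewrite mem_cat ht.
by move=> t ht; apply: hx; rewrite mem_cat ht orbT.
Qed.

End Topo.

End MF.
Import MF.

Theorem mainTheorem16 (R : realType) (K : closedFieldType) (absv : K -> R)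
    (P Q : {poly K}) (C lam : R) :
  is_Cv_abs absv ->
  [pchar K] =i pred0 ->
  coprimep P Q ->
  (2 <= rat_deg P Q)%N ->
  0 < C -> 1 < lam ->
  (forall (n : nat) (z : berkT R K), (1 <= n)%N -> julia absv P Q z ->
     exists L, sph_deriv_is absv (iter n (berk_act absv P Q)) z L /\
               C * lam ^+ n <= L) ->
  forall z, julia absv P Q z -> is_typeI absv z.
Proof.
move=> Hv _ _ _ C0 lam1 Hder z Jz.
apply: contrapT => nT.
have BPz : BP absv z by case: Jz.
case: z Jz BPz nT => [s|] Jz BPz nT; last by apply: nT; exists None.
have Hs : A1 absv s := BPz.
have HnI : forall a, s ('X - a%:P) <> 0.
  move=> a h; apply: nT; exists (Some a) => /=; congr Some.
  by apply/funext => g; rewrite (s_typeI Hv Hs h).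
have [rho [rho0 hrho]] := s_lin_lb Hv Hs HnI.
pose M := s 'X + 1.
have sX0 : 0 <= s 'X := s_ge0 Hs 'X.
pose l1 : seq ({poly K} * R * R) := [:: ('X, -1, M)].
have hl1 : forall t, t \in l1 -> t.1.2 < s t.1.1 < t.2.
  move=> t; rewrite inE => /eqP -> /=; apply/andP; split; rewrite /M; lra.
pose M1 := Num.max 1 M.
have M10 : 0 < M1 by rewrite /M1 lt_max ltr01.
pose del := (rho / 2) / (M1 * M1).
have del0 : 0 < del.
  apply: divr_gt0; [apply: divr_gt0 => //; lra | exact: mulr_gt0].
have ge0 := absv_ge0 Hv.
have chord_lb : forall xi a0, absv xi < M -> absv a0 < M -> rho / 2 < absv (xi - a0) ->
    del <= chordal absv (Some xi) (Some a0).
  move=> xi a0 hxi ha0 hd /=.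
  have mx b : absv b < M -> Num.max 1 (absv b) <= M1.
    move=> hb; rewrite ge_max /M1 le_max lexx /= le_max (ltW hb) orbT //.
  have mp b : 0 < Num.max 1 (absv b) by rewrite lt_max ltr01.
  have Dp := mulr_gt0 (mp xi) (mp a0).
  rewrite ler_pdivlMr //.
  apply: (@le_trans _ _ (del * (M1 * M1))).
    apply: ler_wpM2l; first exact: ltW.
    by apply: ler_pM; [exact: ltW | exact: ltW | exact: mx | exact: mx].
  have -> : del * (M1 * M1) = rho / 2.
    rewrite /del -mulrA mulVf ?mulr1 //; apply: lt0r_neq0; exact: mulr_gt0.
  exact: ltW.
have bound : forall n, (1 <= n)%N -> C * lam ^+ n < del^-1 + 1.
  move=> n n1.
  have [L [HL CL]] := Hder n (Some s) n1 Jz.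
  apply: le_lt_trans CL _.
  have [U0 [oU0 U0z HU0]] := HL 1 ltr01.
  have [a0 [U0a0 ha0]] := dens_open Hv Hs HnI oU0 U0z hl1.
  have a0M : absv a0 < M.
    by have /andP[_] := ha0 _ (mem_head _ _); rewrite hornerX.
  set z' := typeI_pt absv (Some a0) in U0a0.
  have z'ne : z' <> Some s.
    by move=> e; apply: nT; exists (Some a0); rewrite -e.
  have := HU0 z' U0a0 z'ne.
  set F := iter n (berk_act absv P Q).
  have hk1 : sph_kernel absv (F (Some s)) (F z') <= 1 by apply: (kernel_le1 Hv).
  have k2 : del <= sph_kernel absv (Some s) z'.
    apply: (kernel_ge Hv).
      exists (BP absv), (BP absv); split; try exact: BP_open => //.
      by []. exact: (typeI_A1 Hv).
    move=> U V oU Uz oV Vz'.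
    have [x1 [Ux1 hx1]] := dens_open Hv Hs HnI oU Uz hl1.
    have x1M : absv x1 < M.
      by have /andP[_] := hx1 _ (mem_head _ _); rewrite hornerX.
    pose l2 : seq ({poly K} * R * R) :=
      [:: ('X, -1, M); ('X - x1%:P, rho / 2, s ('X - x1%:P) + 1)].
    have hl2 : forall t, t \in l2 -> t.1.2 < s t.1.1 < t.2.
      move=> t; rewrite !inE => /orP[/eqP -> /=|/eqP -> /=];
        apply/andP; split; rewrite /M; try lra.
      by have := hrho x1; lra.
    have [x2 [Ux2 hx2]] := dens_open Hv Hs HnI oU Uz hl2.
    have x2M : absv x2 < M.
      by have /andP[_] := hx2 _ (mem_head _ _); rewrite hornerX.
    have d12 : rho / 2 < absv (x2 - x1).
      have mem : ('X - x1%:P, rho / 2, s ('X - x1%:P) + 1) \in l2.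
        by rewrite !inE eqxx orbT.
      have /andP[h _] := hx2 _ mem.
      by move: h; rewrite /= hornerXsubC.
    have : absv (x2 - x1) <= Num.max (absv (x2 - a0)) (absv (x1 - a0)).
      by have := absv_max3 Hv (x2 - a0) (x1 - a0); rewrite opprB addrA subrK.
    rewrite le_max => /orP[] hm.
    - exists (chordal absv (Some x2) (Some a0)); split.
        by exists (Some x2), (Some a0).
      apply: chord_lb => //; exact: lt_le_trans d12 hm.
    - exists (chordal absv (Some x1) (Some a0)); split.
        by exists (Some x1), (Some a0).
      apply: chord_lb => //; exact: lt_le_trans d12 hm.
  set a := sph_kernel absv (F (Some s)) (F z') in hk1 *.
  set b := sph_kernel absv (Some s) z' in k2 *.
  have b0 : 0 < b by apply: lt_le_trans k2.
  have ab : a / b <= del^-1.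
    apply: (@le_trans _ _ b^-1).
      by rewrite -[X in _ <= X]mul1r ler_wpM2r // invr_ge0 ltW.
    by rewrite lef_pV2 ?posrE.
  move=> /ltr_normlP [h1 h2]; lra.
have [n hn] := @pow_unbounded R lam ((del^-1 + 1) / C) lam1.
have := bound n.+1 (ltn0Sn n).
have : lam ^+ n <= lam ^+ n.+1 by rewrite exprS ler_peMl ?exprn_ge0 ?ltW //; lra.
move: hn; rewrite ltr_pdivrMr // => hn h1 h2.
have : C * lam ^+ n <= C * lam ^+ n.+1 by rewrite ler_wpM2l // ltW.
rewrite mulrC in hn; lra.
Qed.
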